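(* Let $p\in\mathcal P_9$ be extremal, of the form $p(z)=(z-a)\prod_{k=1}^{8}(z-z_k)$ with $|z_k|\le 1$, $a$ real with $0<a<1$, and $I(a)=I(p)$. Let $\zeta_1,\dots,\zeta_8$ be the zeros of $p'$, $r_k=|a-z_k|$, $\rho_j=|a-\zeta_j|$, and $R_k=r_k\prod_{j=1}^{8}r_j^{-1/8}$. If $\min_j\rho_j>1$, then $$\sum_{k=1}^{8}\frac1{R_k^2}\le U^\ast(a),$$ where, with $s=2\sin(\pi/9)$, $$U^\ast(a)=(8-v^\ast)\Big(\frac{s}{1+a}\Big)^{-7/4}+(v^\ast-1)\Big(\frac{1+a}{9^{1/8}}\Big)^{-2}+\Big\{\Big(\frac{s}{1+a}\Big)^{\frac78(8-v^\ast)}\Big(\frac{1+a}{9^{1/8}}\Big)^{v^\ast-1}\Big\}^2,$$ and $v^\ast$ is the least integer $j$ with $$j\ \ge\ 7\log\Big(\frac{1+a}{s}\Big)\Big/\log\Big(\frac{(1+a)^{15/8}}{9^{1/8}s^{7/8}}\Big).$$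
   Context: For $n\ge2$, $\mathcal P_n$ denotes the set of monic polynomials of degree $n$ all of whose zeros lie in the closed unit disk $\{|z|\le1\}$. For $p\in\mathcal P_n$ with critical points (zeros of $p'$) $\zeta_1,\dots,\zeta_{n-1}$ and for a zero $w$ of $p$, $I(w)=\min_{1\le j\le n-1}|w-\zeta_j|$; $I(p)=\max\{I(w): p(w)=0\}$; and $I(\mathcal P_n)=\sup_{p\in\mathcal P_n}I(p)$. A polynomial $p\in\mathcal P_n$ is extremal if $I(p)=I(\mathcal P_n)$. *)

(* Defs.v *)
From Stdlib Require Import Reals Lra List ZArith.
Import ListNotations.
Open Scope R_scope.

Definition Cx := (R * R)%type.
Definition C0 : Cx := (0, 0).
Definition C1 : Cx := (1, 0).
Definition RtoC (x : R) : Cx := (x, 0).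
Definition Cadd (u v : Cx) : Cx := (fst u + fst v, snd u + snd v).
Definition Csub (u v : Cx) : Cx := (fst u - fst v, snd u - snd v).
Definition Cmul (u v : Cx) : Cx :=
  (fst u * fst v - snd u * snd v, fst u * snd v + snd u * fst v).
Definition Cmod (u : Cx) : R := sqrt (fst u ^ 2 + snd u ^ 2).

Fixpoint peval (ws : list Cx) (z : Cx) : Cx :=
  match ws with
  | [] => C1
  | w :: ws' => Cmul (Csub z w) (peval ws' z)
  end.

Fixpoint pderiv (ws : list Cx) (z : Cx) : Cx :=
  match ws with
  | [] => C0
  | w :: ws' => Cadd (peval ws' z) (Cmul (Csub z w) (pderiv ws' z))
  end.

(* p in P_n : monic of degree n (n zeros counted with multiplicity),
   all zeros in the closed unit disk. *)
Definition inP (n : nat) (ws : list Cx) : Prop :=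
  length ws = n /\ Forall (fun w => Cmod w <= 1) ws.

Definition is_crit (ws zs : list Cx) : Prop :=
  length zs = pred (length ws) /\
  forall z, pderiv ws z = Cmul (RtoC (INR (length ws))) (peval zs z).

Fixpoint Rmin_list (l : list R) : R :=
  match l with
  | [] => 0
  | [x] => x
  | x :: l' => Rmin x (Rmin_list l')
  end.
Fixpoint Rmax_list (l : list R) : R :=
  match l with
  | [] => 0
  | [x] => x
  | x :: l' => Rmax x (Rmax_list l')
  end.

Definition Iw (w : Cx) (zs : list Cx) : R :=
  Rmin_list (map (fun zeta => Cmod (Csub w zeta)) zs).
Definition Ip (ws zs : list Cx) : R := Rmax_list (map (fun w => Iw w zs) ws).

Definition Iset (n : nat) (x : R) : Prop :=
  exists ws zs, inP n ws /\ is_crit ws zs /\ x = Ip ws zs.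

Definition extremal (n : nat) (ws : list Cx) : Prop :=
  inP n ws /\ forall zs, is_crit ws zs -> is_lub (Iset n) (Ip ws zs).

Definition s_const : R := 2 * sin (PI / 9).

Definition vstar_bound (a : R) : R :=
  7 * ln ((1 + a) / s_const) /
  ln (Rpower (1 + a) (15 / 8) / (Rpower 9 (1 / 8) * Rpower s_const (7 / 8))).

Definition Ustar (a : R) (v : Z) : R :=
  let A := s_const / (1 + a) in
  let B := (1 + a) / Rpower 9 (1 / 8) in
  (8 - IZR v) * Rpower A (- (7 / 4))
  + (IZR v - 1) * Rpower B (-2)
  + (Rpower A (7 / 8 * (8 - IZR v)) * Rpower B (IZR v - 1)) ^ 2.

(* Main.v *)
Require Import Defs.
From Stdlib Require Import Reals List ZArith.
From Stdlib Require Import Lra Lia.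
Open Scope R_scope.

Fixpoint cpow (u : Cx) (n : nat) : Cx :=
  match n with O => Defs.C1 | S n' => Cmul u (cpow u n') end.

Lemma demoivre t n : cpow (cos t, sin t) n = (cos (INR n * t), sin (INR n * t)).
Proof.
induction n as [|n IH].
- simpl. rewrite Rmult_0_l, cos_0, sin_0. reflexivity.
- cbn [cpow]. rewrite IH. unfold Cmul. cbn [fst snd].
  rewrite S_INR. replace ((INR n + 1) * t) with (t + INR n * t) by ring.
  rewrite cos_plus, sin_plus. f_equal; ring.
Qed.

Lemma unity_aux t : 0 < t <= PI -> cos (9 * t) = 1 -> sin (9 * t) = 0 -> cos t <= cos (2 * PI / 9).
Proof.
intros [Ht1 Ht2] Hc Hs.
destruct (sin_eq_0_0 _ Hs) as [k Hk].
assert (HP := PI_RGT_0).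
assert (Hk0 : (0 < k)%Z).
{ apply lt_IZR. apply Rmult_lt_reg_r with PI; [lra|]. rewrite <- Hk. lra. }
assert (Hk1 : k <> 1%Z).
{ intros E. subst k. rewrite Hk, Rmult_1_l, cos_PI in Hc. lra. }
assert (Hk2 : 2 <= IZR k). { apply IZR_le. lia. }
assert (Ht : 2 * PI / 9 <= t).
{ assert (9 * t >= 2 * PI) by nra. lra. }
destruct (Req_dec t (2 * PI / 9)) as [E|E].
- rewrite E. lra.
- left. apply cos_decreasing_1; lra.
Qed.

Lemma unity_re x y : x ^ 2 + y ^ 2 = 1 -> cpow (x, y) 9 = (1, 0) -> (x, y) <> (1, 0) ->
  x <= cos (2 * PI / 9).
Proof.
intros H1 H9 Hne.
assert (Hx : -1 <= x <= 1) by nra.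
set (th := acos x).
assert (Hb := acos_bound x). fold th in Hb.
assert (Hc : cos th = x) by (apply cos_acos; exact Hx).
assert (Hs : sin th = Rabs y).
{ unfold th. rewrite sin_acos by exact Hx. rewrite <- sqrt_Rsqr_abs. f_equal. unfold Rsqr. nra. }
assert (Hgen : forall t, cos t = x -> sin t = y -> -PI <= t <= PI -> x <= cos (2 * PI / 9)).
{ intros t Ht1 Ht2 Ht3.
  rewrite <- Ht1, <- Ht2 in H9. rewrite demoivre in H9.
  replace (INR 9) with 9 in H9 by (simpl; ring).
  injection H9 as E1 E2.
  destruct (Rtotal_order t 0) as [Hlt|[Heq|Hgt]].
  - rewrite <- Ht1, <- cos_neg. apply unity_aux.
    + lra.
    + replace (9 * - t) with (- (9 * t)) by ring. rewrite cos_neg. exact E1.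
    + replace (9 * - t) with (- (9 * t)) by ring. rewrite sin_neg, E2. ring.
  - exfalso. apply Hne. rewrite Heq, cos_0 in Ht1. rewrite Heq, sin_0 in Ht2. rewrite <- Ht1, <- Ht2. reflexivity.
  - rewrite <- Ht1. apply unity_aux; lra. }
destruct (Rle_dec 0 y) as [Hy|Hy].
- apply (Hgen th Hc). rewrite Hs, Rabs_right by lra. reflexivity. lra.
- apply (Hgen (- th)). rewrite cos_neg; exact Hc.
  rewrite sin_neg, Hs, Rabs_left by lra. ring. lra.
Qed.

Lemma s_sq : s_const ^ 2 = 2 - 2 * cos (2 * PI / 9).
Proof.
unfold s_const. replace (2 * PI / 9) with (2 * (PI / 9)) by field.
rewrite cos_2a_sin. ring.
Qed.

Definition dsq (u : Cx) (a : R) : R := (fst u - a) ^ 2 + (snd u) ^ 2.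

Lemma s_pos : 0 < s_const.
Proof.
unfold s_const. assert (HP := PI_RGT_0). assert (0 < sin (PI / 9)).
{ apply sin_gt_0; lra. } lra.
Qed.

Definition phi (x : R) : R := exp (-2 * x).

Lemma two_point p q u w : p <= u <= q -> p <= w <= q -> u + w = p + q ->
  phi u + phi w <= phi p + phi q.
Proof.
intros Hu Hw Hs. unfold phi.
set (d := u - p).
replace u with (p + d) by (unfold d; ring).
replace w with (q - d) by (unfold d; lra).
replace (-2 * (p + d)) with (-2 * p + -2 * d) by ring.
replace (-2 * (q - d)) with (-2 * q + 2 * d) by ring.
rewrite !exp_plus.
assert (HE1 : exp (-2 * d) <= 1).
{ rewrite <- exp_0. apply exp_le_3 || (destruct (Req_dec d 0) as [E|E]; [rewrite E; replace (-2*0) with 0 by ring; lra| left; apply exp_increasing; unfold d in *; lra]). }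
assert (HE12 : exp (-2 * d) * exp (2 * d) = 1).
{ rewrite <- exp_plus. replace (-2 * d + 2 * d) with 0 by ring. apply exp_0. }
assert (HPQ : exp (-2 * q) * exp (2 * d) <= exp (-2 * p)).
{ rewrite <- exp_plus. destruct (Req_dec (-2 * q + 2 * d) (-2 * p)) as [E|E].
  - rewrite E; lra.
  - left. apply exp_increasing. unfold d in *. lra. }
assert (Hpos : 0 <= (1 - exp (-2 * d)) * (exp (-2 * p) - exp (-2 * q) * exp (2 * d))).
{ apply Rmult_le_pos; lra. }
set (E1 := exp (-2 * d)) in *. set (E2 := exp (2 * d)) in *.
set (P := exp (-2 * p)) in *. set (Qv := exp (-2 * q)) in *.
assert (H3 : E1 * E2 * Qv = Qv) by (rewrite HE12; ring).
assert (H4 : (1 - E1) * (P - Qv * E2) = P - Qv * E2 - E1 * P + E1 * E2 * Qv) by ring.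
lra.
Qed.

Fixpoint lsum (xs : list R) : R := match xs with nil => 0 | x :: xs' => x + lsum xs' end.

Lemma lsum_nonneg l xs : Forall (fun x => l <= x) xs -> 0 <= lsum (map (fun x => x - l) xs).
Proof.
induction 1 as [|x xs Hx Hxs IH]; simpl; lra.
Qed.

Lemma smooth (l b : R) (xs : list R) : l < b -> Forall (fun x => l <= x <= b) xs ->
  forall (n : nat) (m : R), l <= m <= b ->
  lsum (map (fun x => x - l) xs) = INR n * (b - l) + (m - l) ->
  lsum (map (fun x => phi x - phi l) xs) <= INR n * (phi b - phi l) + (phi m - phi l).
Proof.
intros Hlb HF. induction HF as [|x xs Hx Hxs IH]; intros n m Hm Hsum; simpl in *.
- assert (Hn : 0 <= INR n) by apply pos_INR.
  assert (INR n * (b - l) >= 0) by nra.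
  assert (E1 : m = l) by lra.
  assert (E2 : INR n * (b - l) = 0) by lra.
  destruct (Rmult_integral _ _ E2) as [E3|E3]; [|lra].
  rewrite E3, E1. lra.
- assert (Hxs0 : Forall (fun y => l <= y) xs).
  { eapply Forall_impl; [|exact Hxs]. intros y Hy; simpl in Hy; lra. }
  assert (Hnn := lsum_nonneg l xs Hxs0).
  destruct (Rle_dec x m) as [Hxm|Hxm].
  + assert (H1 := IH n (m - x + l) ltac:(lra) ltac:(lra)).
    assert (H2 := two_point l m x (m - x + l) ltac:(lra) ltac:(lra) ltac:(ring)).
    lra.
  + destruct n as [|n'].
    * simpl in Hsum. lra.
    * rewrite S_INR in *.
      assert (H1 := IH n' (m + b - x) ltac:(lra) ltac:(lra)).
      assert (H2 := two_point m b x (m + b - x) ltac:(lra) ltac:(lra) ltac:(ring)).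
      lra.
Qed.

Lemma ln_le x y : 0 < x -> x <= y -> ln x <= ln y.
Proof. intros Hx [H|H]; [left; apply ln_increasing; lra| subst; lra]. Qed.
Lemma ln_div x y : 0 < x -> 0 < y -> ln (x / y) = ln x - ln y.
Proof. intros Hx Hy. unfold Rdiv. rewrite ln_mult, ln_Rinv; try lra. apply Rinv_0_lt_compat; lra. Qed.

Lemma div_le x y z : 0 < z -> x <= y * z -> x / z <= y.
Proof.
intros Hz H. unfold Rdiv. apply (Rmult_le_reg_r z); [exact Hz|].
rewrite Rmult_assoc, Rinv_l by lra. lra.
Qed.
Lemma le_div x y z : 0 < z -> y * z <= x -> y <= x / z.
Proof.
intros Hz H. unfold Rdiv. apply (Rmult_le_reg_r z); [exact Hz|].
rewrite Rmult_assoc, Rinv_l by lra. lra.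
Qed.

Lemma inv_exp_sq y : 1 / (exp y ^ 2) = phi y.
Proof.
unfold phi. replace (-2 * y) with (- (y + y)) by ring.
rewrite exp_Ropp, exp_plus. field. apply Rgt_not_eq, exp_pos.
Qed.

Lemma core (a : R) (r : nat -> R) (v : Z) :
  0 < a < 1 ->
  (forall k, (k < 8)%nat -> s_const < r k <= 1 + a) ->
  9 <= prod_f_R0 r 7 ->
  IZR v >= vstar_bound a -> (forall j, IZR j >= vstar_bound a -> (v <= j)%Z) ->
  sum_f_R0 (fun k => 1 / ((r k * prod_f_R0 (fun j => Rpower (r j) (-(1/8))) 7) ^ 2)) 7 <= Ustar a v.
Proof.
intros Ha Hr Hprod Hv Hmin.
assert (Hs := s_pos).
assert (Hr0 : forall k, (k < 8)%nat -> 0 < r k) by (intros k Hk; specialize (Hr k Hk); lra).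
set (t := fun k => ln (r k)).
set (T := t 0%nat + t 1%nat + t 2%nat + t 3%nat + t 4%nat + t 5%nat + t 6%nat + t 7%nat).
assert (Hup : forall k, (k < 8)%nat -> t k <= ln (1 + a)).
{ intros k Hk. unfold t. apply ln_le; [apply Hr0; exact Hk| apply Hr; exact Hk]. }
assert (Hlo : forall k, (k < 8)%nat -> ln s_const < t k).
{ intros k Hk. unfold t. apply ln_increasing; [exact Hs| apply Hr; exact Hk]. }
assert (HT : ln 9 <= T).
{ assert (E : prod_f_R0 r 7 = exp T).
  { unfold T, t. cbn [prod_f_R0]. rewrite !exp_plus, !exp_ln by (apply Hr0; lia). reflexivity. }
  rewrite E in Hprod. rewrite <- (ln_exp T). apply ln_le; lra. }
assert (HPi : prod_f_R0 (fun j => Rpower (r j) (-(1/8))) 7 = exp (-(1/8) * T)).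
{ unfold Rpower, T, t. cbn [prod_f_R0]. rewrite <- !exp_plus. f_equal. ring. }
assert (HRk : forall k, (k < 8)%nat ->
  1 / ((r k * prod_f_R0 (fun j => Rpower (r j) (-(1/8))) 7) ^ 2) = phi (t k - T / 8)).
{ intros k Hk. rewrite HPi. rewrite <- (exp_ln (r k)) by (apply Hr0; exact Hk).
  rewrite <- exp_plus. rewrite inv_exp_sq. unfold t. f_equal. field. }
rewrite (sum_eq _ (fun k => phi (t k - T / 8))) by (intros i Hi; apply HRk; lia).
set (L1 := ln (1 + a)) in *. set (Ls := ln s_const) in *. set (L9 := ln 9) in *.
set (l := 7 / 8 * (Ls - L1)). set (b := L1 - L9 / 8).
assert (H1a : 0 < 1 + a) by lra.
assert (H9 : 0 < 9) by lra.
assert (HU : Ustar a v = (8 - IZR v) * phi l + (IZR v - 1) * phi b +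
   phi (- ((8 - IZR v) * l + (IZR v - 1) * b))).
{ unfold Ustar. cbv zeta. unfold Rpower.
  rewrite !ln_div by (try apply exp_pos; lra).
  rewrite ln_exp.
  fold L1 Ls L9.
  unfold phi.
  replace (- (7 / 4) * (Ls - L1)) with (-2 * l) by (unfold l; field).
  replace (-2 * (L1 - 1 / 8 * L9)) with (-2 * b) by (unfold b; field).
  rewrite <- exp_plus.
  set (Z := 7 / 8 * (8 - IZR v) * (Ls - L1) + (IZR v - 1) * (L1 - 1 / 8 * L9)).
  replace (exp Z ^ 2) with (exp (Z + Z)) by (rewrite exp_plus; ring).
  replace (Z + Z) with (-2 * - ((8 - IZR v) * l + (IZR v - 1) * b)) by (unfold Z, l, b; field).
  reflexivity. }
assert (HV : vstar_bound a = - 8 * l / (b - l)).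
{ unfold vstar_bound, Rpower.
  rewrite !ln_div by (try apply exp_pos; try lra; apply Rmult_lt_0_compat; apply exp_pos).
  rewrite ln_mult by apply exp_pos.
  rewrite !ln_exp. fold L1 Ls L9. unfold l, b. f_equal; field. }
rewrite HV in Hv. rewrite HU.
set (x := fun k => t k - T / 8).
assert (Ht := fun k (Hk : (k < 8)%nat) => conj (Hlo k Hk) (Hup k Hk)).
assert (H0 := Ht 0%nat ltac:(lia)). assert (H1 := Ht 1%nat ltac:(lia)).
assert (H2 := Ht 2%nat ltac:(lia)). assert (H3 := Ht 3%nat ltac:(lia)).
assert (H4 := Ht 4%nat ltac:(lia)). assert (H5 := Ht 5%nat ltac:(lia)).
assert (H6 := Ht 6%nat ltac:(lia)). assert (H7 := Ht 7%nat ltac:(lia)).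
unfold x in *. clear Ht Hup Hlo HRk HPi.
cbn [sum_f_R0].
set (t0 := t 0%nat) in *. set (t1 := t 1%nat) in *. set (t2 := t 2%nat) in *. set (t3 := t 3%nat) in *.
set (t4 := t 4%nat) in *. set (t5 := t 5%nat) in *. set (t6 := t 6%nat) in *. set (t7 := t 7%nat) in *.
assert (Hl : l < 0) by (unfold l, T in *; lra).
assert (Hb : 0 <= b) by (unfold b, T in *; lra).
assert (HD : 0 < b - l) by lra.
assert (HVp : 0 < - 8 * l / (b - l)) by (apply Rdiv_lt_0_compat; lra).
assert (Hv1 : (1 <= v)%Z).
{ assert (0 < IZR v) by lra. apply lt_IZR in H. lia. }
assert (Hv8 : (v <= 8)%Z).
{ apply Hmin. rewrite HV. apply Rle_ge. apply div_le; [lra|]. lra. }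
assert (Hvm1 : IZR (v - 1) < - 8 * l / (b - l)).
{ destruct (Rlt_dec (IZR (v - 1)) (- 8 * l / (b - l))) as [H|H]; [exact H|].
  exfalso. assert (Hc := Hmin (v - 1)%Z). rewrite HV in Hc.
  assert ((v <= v - 1)%Z) by (apply Hc; lra). lia. }
rewrite minus_IZR in Hvm1.
assert (HA1 : (IZR v - 1) * (b - l) < - 8 * l).
{ apply (Rmult_lt_compat_r (b - l)) in Hvm1; [|lra].
  unfold Rdiv in Hvm1. rewrite Rmult_assoc, Rinv_l in Hvm1 by lra. lra. }
assert (HA2 : - 8 * l <= IZR v * (b - l)).
{ apply Rge_le in Hv. apply (Rmult_le_compat_r (b - l)) in Hv; [|lra].
  unfold Rdiv in Hv. rewrite Rmult_assoc, Rinv_l in Hv by lra. lra. }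
set (m := - ((8 - IZR v) * l + (IZR v - 1) * b)).
assert (Hm : l <= m <= b).
{ assert (E1 : m - l = - 8 * l - (IZR v - 1) * (b - l)) by (unfold m; ring).
  assert (E2 : b - m = IZR v * (b - l) + 8 * l) by (unfold m; ring).
  lra. }
set (n := Z.to_nat (v - 1)).
assert (Hn : INR n = IZR v - 1).
{ unfold n. rewrite INR_IZR_INZ, Z2Nat.id by lia. rewrite minus_IZR. reflexivity. }
set (xs := (t0 - T/8) :: (t1 - T/8) :: (t2 - T/8) :: (t3 - T/8) :: (t4 - T/8) :: (t5 - T/8) :: (t6 - T/8) :: (t7 - T/8) :: nil).
assert (HF : Forall (fun y => l <= y <= b) xs).
{ assert (HTd : T = t0 + t1 + t2 + t3 + t4 + t5 + t6 + t7) by reflexivity.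
  unfold xs, l, b; clear -H0 H1 H2 H3 H4 H5 H6 H7 HT HTd.
  clearbody T t0 t1 t2 t3 t4 t5 t6 t7 L1 Ls L9.
  repeat (apply Forall_cons; [split; lra|]). apply Forall_nil. }
assert (HS := smooth l b xs ltac:(lra) HF n m Hm).
unfold xs in HS. cbn [map lsum] in HS.
rewrite Hn in HS.
assert (HS' : lsum nil = 0) by reflexivity.
apply (Rle_trans _ _ _ (Rle_refl _)).
enough (E : (t0 - T / 8 - l) + ((t1 - T / 8 - l) + ((t2 - T / 8 - l) + ((t3 - T / 8 - l) + ((t4 - T / 8 - l) + ((t5 - T / 8 - l) + ((t6 - T / 8 - l) + ((t7 - T / 8 - l) + 0))))))) = (IZR v - 1) * (b - l) + (m - l)).
{ specialize (HS E). lra. }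
unfold m, T. field.
Qed.

From HB Require structures.
From mathcomp Require all_boot all_order all_algebra all_field.
From mathcomp Require Rstruct complex ring lra zify.

Module CA.
Import HB.structures.
Import all_boot all_order all_algebra all_field.
Import Rstruct complex ring lra zify.
Import Order.TTheory GRing.Theory Num.Theory.
Local Open Scope ring_scope.
Set Implicit Arguments. Unset Strict Implicit. Unset Printing Implicit Defensive.

Notation C := (R[i]).
Definition D (m : nat) (b : C) (g : {poly C}) : {poly C} :=
  m%:R *: g - ('X - b%:P) * g^`().
Fixpoint Lit (bs : seq C) (g : {poly C}) : {poly C} :=
  match bs with [::] => g | b :: bs' => Lit bs' (D (size bs) b g) end.

Lemma D_add m b g h : D m b (g + h) = D m b g + D m b h.
Proof. rewrite /D derivD scalerDr mulrDr; ring. Qed.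
Lemma D_scale m b k g : D m b (k *: g) = k *: D m b g.
Proof. rewrite /D derivZ scalerBr scalerA mulrC -scalerA -scalerAr; done. Qed.
Lemma Lit_add bs g h : Lit bs (g + h) = Lit bs g + Lit bs h.
Proof. elim: bs g h => [|b bs IH] g h /=. by []. by rewrite D_add IH. Qed.
Lemma Lit_scale bs k g : Lit bs (k *: g) = k *: Lit bs g.
Proof. elim: bs g => [|b bs IH] g /=. by []. by rewrite D_scale IH. Qed.
Lemma Lit0 bs : Lit bs 0 = 0.
Proof. by have := Lit_scale bs 0 0; rewrite !scale0r. Qed.

Lemma D_size m b (g : {poly C}) : (size g <= m.+1)%N -> (size (D m b g) <= m)%N.
Proof.
move=> /leq_sizeP Hg; apply/leq_sizeP => j hj.
rewrite /D coefB coefZ mulrBl coefB coefXM coefCM !coef_deriv.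
rewrite (Hg j.+1); last by lia.
rewrite mul0rn mulr0 subr0.
case: j hj => [|k] hj /=.
  by rewrite (_ : m = 0%N) ?mul0r ?subrr //; lia.
have [hm|hm] := boolP (m == k.+1).
  by rewrite (eqP hm) mulr_natl subrr.
by rewrite Hg ?mul0rn ?mulr0 ?subr0 //; lia.
Qed.
Lemma Lit_size bs (g : {poly C}) : (size g <= (size bs).+1)%N -> (size (Lit bs g) <= 1)%N.
Proof. elim: bs g => [|b bs IH] g //= hg; apply: IH; exact: D_size. Qed.

Lemma D_pow m b y : D m.+1 b (('X - y%:P)^+m.+1) = ((m.+1)%:R * (b - y)) *: ('X - y%:P)^+m.
Proof.
rewrite /D deriv_exp derivXsubC mul1r /= exprS.
have -> : 'X - b%:P = ('X - y%:P) - (b - y)%:P by rewrite polyCB; ring.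
rewrite -!mul_polyC polyCM polyC_natr; ring.
Qed.
Lemma Lit_pow bs y : Lit bs (('X - y%:P)^+(size bs)) = (((size bs)`!)%:R * \prod_(b <- bs) (b - y))%:P.
Proof.
elim: bs => [|b bs IH] /=; first by rewrite big_nil expr0 mulr1.
rewrite D_pow Lit_scale IH big_cons -mul_polyC -polyCM factS natrM; congr (_%:P); ring.
Qed.

Notation Rec := (@complex.Re R).
Notation Imc := (@complex.Im R).
Definition nm2 (x : C) := Rec x ^+ 2 + Imc x ^+ 2.
Lemma ReM (x y : C) : Rec (x * y) = Rec x * Rec y - Imc x * Imc y.
Proof. by case: x => a b; case: y => c d. Qed.
Lemma ImM (x y : C) : Imc (x * y) = Rec x * Imc y + Imc x * Rec y.
Proof. by case: x => a b; case: y => c d. Qed.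
Lemma ReD (x y : C) : Rec (x + y) = Rec x + Rec y.
Proof. by case: x => a b; case: y => c d. Qed.
Lemma ImD (x y : C) : Imc (x + y) = Imc x + Imc y.
Proof. by case: x => a b; case: y => c d. Qed.
Lemma ReN (x : C) : Rec (- x) = - Rec x.
Proof. by case: x => a b. Qed.
Lemma ImN (x : C) : Imc (- x) = - Imc x.
Proof. by case: x => a b. Qed.
Lemma ReV (x : C) : Rec (x^-1) = Rec x / nm2 x.
Proof. by case: x => a b. Qed.
Lemma ImV (x : C) : Imc (x^-1) = - Imc x / nm2 x.
Proof. by case: x => a b /=; rewrite /nm2 /= mulNr. Qed.
Lemma Re0 : Rec (0 : C) = 0. Proof. by []. Qed.
Lemma Im0 : Imc (0 : C) = 0. Proof. by []. Qed.
Lemma Re1 : Rec (1 : C) = 1. Proof. by []. Qed.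
Lemma Im1 : Imc (1 : C) = 0. Proof. by []. Qed.
Lemma Ren (n : nat) : Rec (n%:R : C) = n%:R.
Proof. elim: n => [|n IH] //; by rewrite -addn1 !natrD ReD IH. Qed.
Lemma Imn (n : nat) : Imc (n%:R : C) = 0.
Proof. elim: n => [|n IH] //; by rewrite -addn1 !natrD ImD IH addr0. Qed.
Lemma C_eq (x y : C) : Rec x = Rec y -> Imc x = Imc y -> x = y.
Proof. by case: x => a b; case: y => c d /= -> ->. Qed.

Lemma logderiv (rs : seq C) z : z \notin rs ->
  (\prod_(r <- rs) ('X - r%:P))^`().[z] = (\prod_(r <- rs) ('X - r%:P)).[z] * \sum_(r <- rs) (z - r)^-1.
Proof.
elim: rs => [|r rs IH].
  by rewrite !big_nil -polyC1 derivC horner0 mulr0.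
rewrite in_cons negb_or => /andP [hzr hz].
rewrite !big_cons derivM derivXsubC mul1r hornerD !hornerM IH // !hornerXsubC.
have hz0 : z - r != 0 by rewrite subr_eq0.
by field.
Qed.

Lemma nm2_ge0 x : 0 <= nm2 x.
Proof. by rewrite /nm2 addr_ge0 ?sqr_ge0. Qed.
Lemma nm2_eq0 x : nm2 x = 0 -> x = 0.
Proof.
move/eqP; rewrite /nm2 paddr_eq0 ?sqr_ge0 // !sqrf_eq0 => /andP [/eqP h1 /eqP h2].
by apply: C_eq; [rewrite h1 | rewrite h2].
Qed.
Lemma nm2_gt0 x : x != 0 -> 0 < nm2 x.
Proof. move=> hx; rewrite lt_neqAle nm2_ge0 andbT eq_sym; apply/eqP => /nm2_eq0 h; by rewrite h eqxx in hx. Qed.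
Lemma nm2D x y : nm2 (x + y) = nm2 x + nm2 y + 2 * (Rec x * Rec y + Imc x * Imc y).
Proof. rewrite /nm2 ReD ImD; ring. Qed.
Lemma nm2M x y : nm2 (x * y) = nm2 x * nm2 y.
Proof. rewrite /nm2 ReM ImM; ring. Qed.

Lemma Re_sum (rs : seq C) (F : C -> C) : Rec (\sum_(r <- rs) F r) = \sum_(r <- rs) Rec (F r).
Proof. elim: rs => [|r rs IH]; first by rewrite !big_nil. by rewrite !big_cons ReD IH. Qed.
Lemma Im_sum (rs : seq C) (F : C -> C) : Imc (\sum_(r <- rs) F r) = \sum_(r <- rs) Imc (F r).
Proof. elim: rs => [|r rs IH]; first by rewrite !big_nil. by rewrite !big_cons ImD IH. Qed.

Lemma CS (rs : seq C) (F : C -> C) :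
  nm2 (\sum_(r <- rs) F r) <= (size rs)%:R * \sum_(r <- rs) nm2 (F r).
Proof.
elim: rs => [|r rs IH]; first by rewrite !big_nil /nm2 /= expr0n /= mul0r addr0.
rewrite !big_cons nm2D /=.
set S := \sum_(r <- rs) F r; set T := \sum_(r <- rs) nm2 (F r).
have hT : 0 <= T by rewrite /T; elim: rs {IH S T} => [|r' rs' IH']; rewrite ?big_nil ?big_cons // addr_ge0 // nm2_ge0.
have hx := nm2_ge0 (F r).
move: IH; rewrite -/S -/T /nm2 -[(size rs).+1]addn1 natrD.
set n : R := (size rs)%:R.
have hn : 0 <= n by rewrite /n ler0n.
set a := Rec (F r); set b := Imc (F r); set c := Rec S; set d := Imc S.
move=> IH.
have h1 : 0 <= (n * a - c) ^+ 2 + (n * b - d) ^+ 2 by rewrite addr_ge0 ?sqr_ge0.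
have h2: 2 * (a * c + b * d) <= n * (a ^+ 2 + b ^+ 2) + T.
  have [hn0|hn0] := eqVneq n 0.
    rewrite hn0 mul0r in IH; have hc : c = 0 by nra. have hd : d = 0 by nra.
    rewrite hc hd hn0; nra.
  have hnp : 0 < n by rewrite lt_neqAle eq_sym hn0 hn.
  nra.
nra.
Qed.

Lemma qf_inv (z v : C) : v != 0 ->
  ((1 - nm2 z) * nm2 (v^-1) + 2 * Rec (z * v^-1) - 1) * nm2 v = 1 - nm2 (z - v).
Proof.
move=> hv; have hn := nm2_gt0 hv.
have hn0 : nm2 v != 0 by rewrite gt_eqF.
move: hn0; rewrite /nm2 ReM ReV ImV ReD ImD ReN ImN /nm2 => hn0.
field. exact: hn0.
Qed.

Lemma sumQ (rs : seq C) (F : C -> C) (al : R) (z : C) :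
  \sum_(r <- rs) (al * nm2 (F r) + 2 * Rec (z * F r) - 1) =
  al * \sum_(r <- rs) nm2 (F r) + 2 * Rec (z * \sum_(r <- rs) F r) - (size rs)%:R.
Proof.
elim: rs => [|r rs IH].
  by rewrite !big_nil !mulr0 /= subr0 addr0.
rewrite !big_cons IH /= -addn1 natrD !mulrDr ReD; ring.
Qed.

Lemma sum_neg (rs : seq C) (F : C -> R) : (0 < size rs)%N -> (forall r, r \in rs -> F r < 0) ->
  \sum_(r <- rs) F r < 0.
Proof.
elim: rs => [|r rs IH] //= _ h.
rewrite big_cons.
have hr : F r < 0 by apply: h; rewrite mem_head.
case: rs IH h => [|r' rs'] IH h; first by rewrite big_nil addr0.
have : \sum_(j <- r' :: rs') F j < 0.
  apply: IH => // x hx; apply: h; by rewrite in_cons hx orbT.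
move=> h2; exact: ltr_wpDl (ltW hr) h2 || lra.
Qed.

Lemma laguerre_core (z b : C) (rs : seq C) (m : nat) :
  nm2 z <= 1 -> nm2 b <= 1 -> (size rs <= m)%N -> (0 < m)%N ->
  (forall r, r \in rs -> 1 < nm2 r) -> z != b ->
  (forall r, r \in rs -> z != r) ->
  \sum_(r <- rs) (z - r)^-1 = m%:R * (z - b)^-1 -> False.
Proof.
move=> hz hb hsz hm hrs hzb hzr hsum.
set al := 1 - nm2 z.
have hal : 0 <= al by rewrite /al subr_ge0.
set U := (z - b)^-1.
have hzb0 : z - b != 0 by rewrite subr_eq0.
have hU : U != 0 by rewrite invr_eq0.
have hQb : 0 <= al * nm2 U + 2 * Rec (z * U) - 1.
  have h := qf_inv z hzb0; rewrite (_ : z - (z - b) = b) in h; last by ring.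
  have hp := nm2_gt0 hzb0.
  have : 0 <= (al * nm2 U + 2 * Rec (z * U) - 1) * nm2 (z - b) by rewrite /U h subr_ge0.
  by rewrite pmulr_lge0.
have hQr : forall r, r \in rs -> al * nm2 ((z - r)^-1) + 2 * Rec (z * (z - r)^-1) - 1 < 0.
  move=> r hr; have hzr0 : z - r != 0 by rewrite subr_eq0 hzr.
  have h := qf_inv z hzr0; rewrite (_ : z - (z - r) = r) in h; last by ring.
  have hp := nm2_gt0 hzr0.
  have : (al * nm2 ((z - r)^-1) + 2 * Rec (z * (z - r)^-1) - 1) * nm2 (z - r) < 0
    by rewrite h subr_lt0 hrs.
  by rewrite pmulr_llt0.
set A := \sum_(r <- rs) nm2 ((z - r)^-1).
have hA : 0 <= A by rewrite /A; elim: (rs) => [|r' rs' IH']; rewrite ?big_nil ?big_cons // addr_ge0 // nm2_ge0.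
have hcs := CS rs (fun r => (z - r)^-1).
rewrite hsum -/A nm2M in hcs.
have hnm : nm2 (m%:R : C) = m%:R ^+ 2 by rewrite /nm2 Ren Imn expr0n /= addr0.
rewrite hnm in hcs.
have hre : Rec (z * (m%:R * U)) = m%:R * Rec (z * U).
  by rewrite mulrCA [Rec (_%:R * _)]ReM Ren Imn mul0r subr0.
case: (posnP (size rs)) => hn.
  move: hsum; rewrite (size0nil hn) big_nil => /esym/eqP.
  rewrite mulf_eq0 pnatr_eq0 (negbTE hU) orbF => /eqP hm0; by rewrite hm0 in hm.
have hneg := sum_neg hn hQr.
rewrite sumQ hsum hre -/A in hneg.
set n : R := (size rs)%:R in hcs hneg.
set mm : R := m%:R in hcs hneg.
have hnm' : n <= mm by rewrite /n /mm ler_nat.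
have hmp : 0 < mm by rewrite /mm ltr0n.
have hnp : 0 <= n by rewrite /n ler0n.
set N := nm2 U in hcs hQb. set Z := Rec (z * U) in hneg hQb.
have hN : 0 <= N by exact: nm2_ge0.
have h1 : mm ^+ 2 * N <= mm * A by apply: (le_trans hcs); rewrite ler_wpM2r.
have h2 : al * (mm ^+ 2 * N) <= al * (mm * A) by rewrite ler_wpM2l.
nra.
Qed.

Lemma laguerre m b (g : {poly C}) z : g != 0 -> (size g <= m.+1)%N -> (0 < m)%N ->
  (forall w, root g w -> 1 < nm2 w) -> nm2 b <= 1 -> root (D m b g) z -> 1 < nm2 z.
Proof.
move=> hg hsz hm hroot hb hD.
rewrite ltNge; apply/negP => hz.
have [rs hgrs] := closed_field_poly_normal g.
set lc := lead_coef g in hgrs.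
have hlc : lc != 0 by rewrite lead_coef_eq0.
set P := \prod_(r <- rs) ('X - r%:P) in hgrs.
have hrs : forall r, r \in rs -> 1 < nm2 r.
  move=> r hr; apply: hroot; by rewrite hgrs rootZ // root_prod_XsubC.
have hzrs : z \notin rs by apply/negP => /hrs; rewrite ltNge hz.
have hsize : size g = (size rs).+1 by rewrite hgrs size_scale // size_prod_XsubC.
have hPz : P.[z] != 0.
  by move: hzrs; rewrite -root_prod_XsubC /root.
have hgz : g.[z] = lc * P.[z] by rewrite hgrs hornerZ.
have hgz0 : g.[z] != 0 by rewrite hgz mulf_neq0.
have hdg : g^`().[z] = g.[z] * \sum_(r <- rs) (z - r)^-1.
  by rewrite hgrs derivZ hornerZ logderiv // hornerZ mulrA.
move: hD; rewrite /root /D hornerD hornerN hornerZ hornerM hornerXsubC hdg.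
set S := \sum_(r <- rs) (z - r)^-1 => /eqP hD.
have hS : (z - b) * S = m%:R.
  apply: (mulfI hgz0); rewrite -[g.[z] * m%:R]mulrC.
  by move/eqP: hD; rewrite subr_eq0 => /eqP ->; ring.
have hzb : z != b.
  apply/negP => /eqP hzb; move: hS; rewrite hzb subrr mul0r => /esym/eqP.
  by rewrite pnatr_eq0; case: m hm {hsz hD}.
apply: (laguerre_core hz hb _ hm hrs hzb).
- by rewrite -ltnS -hsize.
- by move=> r hr; apply/negP => /eqP hzr; rewrite hzr hr in hzrs.
- have hzb0 : z - b != 0 by rewrite subr_eq0.
  rewrite -/S -hS; field; exact: hzb0.
Qed.

Lemma grace (bs : seq C) (g : {poly C}) : g != 0 -> (size g <= (size bs).+1)%N ->
  (forall w, root g w -> 1 < nm2 w) -> (forall b, b \in bs -> nm2 b <= 1) -> Lit bs g != 0.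
Proof.
elim: bs g => [|b bs IH] g //= hg hsz hroot hbs.
have hb : nm2 b <= 1 by apply: hbs; rewrite mem_head.
have hbr : ~~ root g b by apply/negP => /hroot; rewrite ltNge hb.
apply: IH.
- apply/negP => /eqP h0.
  have : (D (size bs).+1 b g).[b] = 0 by rewrite h0 horner0.
  rewrite /D hornerD hornerN hornerZ hornerM hornerXsubC subrr mul0r subr0 => /eqP.
  rewrite mulf_eq0 pnatr_eq0 /=; exact/negP.
- exact: D_size.
- move=> w hw; apply: (laguerre hg hsz _ hroot hb hw) => //.
- by move=> x hx; apply: hbs; rewrite in_cons hx orbT.
Qed.

Definition A (g : {poly C}) : {poly C} :=
  \poly_(i < (size g).+1) (if i is j.+1 then g`_j / (j.+1)%:R else 0).
Lemma A_deriv g : (A g)^`() = g.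
Proof.
apply/polyP => i; rewrite coef_deriv coef_poly.
case: ifP => h /=.
  by rewrite -[_ *+ _]mulr_natr divfK // pnatr_eq0.
by move/negbT: h; rewrite ltnS -leqNgt => h; rewrite mul0rn nth_default.
Qed.
Lemma A0 g : (A g)`_0 = 0.
Proof. by rewrite coef_poly. Qed.
Lemma antideriv_uniq (P Q : {poly C}) : P^`() = Q^`() -> P`_0 = Q`_0 -> P = Q.
Proof.
move=> h h0; apply/polyP; case=> [|i]; first exact: h0.
have := congr1 (fun p : {poly C} => p`_i) h; rewrite !coef_deriv => /eqP.
by rewrite eqrMn2r /= => /eqP.
Qed.
Definition I (c : C) g := (A g).[c] - (A g).[0].
Lemma I_anti c g P : P^`() = g -> I c g = P.[c] - P.[0].
Proof.
move=> hP.
have E : P = A g + (P`_0)%:P.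
  by apply: antideriv_uniq; rewrite ?derivD ?derivC ?addr0 ?A_deriv // coefD coefC A0 add0r.
by rewrite /I [in RHS]E !hornerD !hornerC; ring.
Qed.
Lemma I_add c g h : I c (g + h) = I c g + I c h.
Proof. rewrite (I_anti c (P := A g + A h)); last by rewrite derivD !A_deriv. rewrite /I !hornerD; ring. Qed.
Lemma I_scale c k g : I c (k *: g) = k * I c g.
Proof. rewrite (I_anti c (P := k *: A g)); last by rewrite derivZ A_deriv. rewrite /I !hornerZ; ring. Qed.



Lemma zero_test (m : nat) (Phi : {poly C} -> C) :
  (forall g h, Phi (g + h) = Phi g + Phi h) -> (forall k g, Phi (k *: g) = k * Phi g) ->
  (forall y, Phi (('X - y%:P)^+m) = 0) -> forall g : {poly C}, (size g <= m.+1)%N -> Phi g = 0.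
Proof.
move=> hD hZ hy.
have Phi0 : Phi 0 = 0 by have := hZ 0 0; rewrite !scale0r mul0r.
have Phisum : forall n (F : 'I_n -> {poly C}), Phi (\sum_(i < n) F i) = \sum_(i < n) Phi (F i).
  by move=> n F; apply: (big_morph Phi hD Phi0).
set E := \poly_(i < m.+1) (Phi 'X^(m - i) * ('C(m, i))%:R).
have hE : forall y, E.[y] = 0.
  move=> y; rewrite -(hy (- y)) polyCN opprK exprDn Phisum horner_poly.
  apply: eq_bigr => i _.
  rewrite -rmorphXn /= [_ * (y ^+ i)%:P]mulrC mul_polyC -[(_ *: 'X^_) *+ _]scaler_nat scalerA hZ; ring.
have E0 : E = 0.
  apply: (roots_geq_poly_eq0 (rs := [seq (i%:R : C) | i <- iota 0 m.+1])).
  - by apply/allP => x /mapP [i _ ->]; rewrite /root hE.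
  - rewrite map_inj_uniq ?iota_uniq // => a b /eqP; by rewrite eqr_nat => /eqP.
  - by rewrite size_map size_iota size_poly.
have hX : forall i, (i <= m)%N -> Phi 'X^i = 0.
  move=> i hi; have := congr1 (fun p : {poly C} => p`_(m - i)) E0.
  rewrite coef_poly coef0 (_ : (m - i < m.+1)%N = true); last by apply/idP; lia.
  rewrite subKn // => /eqP; rewrite mulf_eq0 pnatr_eq0 eqn0Ngt bin_gt0 leq_subr orbF.
  by move/eqP.
move=> g hg; rewrite -[g]coefK poly_def Phisum.
apply: big1 => i _; rewrite hZ hX ?mulr0 //.
have := ltn_ord i; lia.
Qed.

Lemma key_lemma (bs : seq C) (c : C) (f P : {poly C}) : c != 0 ->
  (forall y, c * \prod_(b <- bs) (b - y) = ((c - y)^+(size bs).+1 - (-y)^+(size bs).+1) / ((size bs).+1)%:R) ->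
  (size f <= (size bs).+1)%N -> P^`() = f -> P.[c] = P.[0] -> (Lit bs f)`_0 = 0.
Proof.
move=> hc hQ hf hP hPc.
set m := size bs in hQ hf.
pose Phi g := (Lit bs g)`_0 - ((m`!)%:R / c) * I c g.
have hPhi : Phi f = 0.
  apply: (zero_test (m := m)) => //.
  - by move=> g h; rewrite /Phi Lit_add coefD I_add; ring.
  - by move=> k g; rewrite /Phi Lit_scale coefZ I_scale; ring.
  - move=> y; rewrite /Phi Lit_pow coefC /=.
    rewrite (I_anti c (P := ((m.+1)%:R)^-1 *: ('X - y%:P)^+m.+1)); last first.
      rewrite derivZ deriv_exp derivXsubC mul1r /= -[(_ ^+ _) *+ _]scaler_nat scalerA mulVf ?scale1r //.
      by rewrite pnatr_eq0.
    rewrite !hornerZ !horner_exp !hornerXsubC sub0r.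
    have hm1 : ((m.+1)%:R : C) != 0 by rewrite pnatr_eq0.
    rewrite -[(m.+1)%:R^-1 * _]mulrC -[(m.+1)%:R^-1 * _]mulrC -mulrBl -hQ.
    by field.
move: hPhi; rewrite /Phi (I_anti c hP) hPc subrr mulr0 subr0 => ->; done.
Qed.

Definition qv (j : nat) : C := nth 0 [:: 1/9; -1; 4; -28/3; 14; -14; 28/3; -4; 1] j.
Definition Q (c : C) : {poly C} := \poly_(j < 9) (qv j * c ^+ (8 - j)).
Lemma Q_eval c y : 9 * c * (Q c).[y] = (c - y)^+9 + y^+9.
Proof.
rewrite horner_poly !big_ord_recr big_ord0 /= /qv /=.
by field.
Qed.
Lemma Q_size c : size (Q c) = 9%N.
Proof. by rewrite size_poly_eq // /qv /= subnn expr0 mulr1 oner_neq0. Qed.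
Lemma Q_lead c : lead_coef (Q c) = 1.
Proof. by rewrite lead_coef_poly // /qv /= subnn expr0 mulr1 ?oner_neq0. Qed.

Definition toC (u : Cx) : C := Complex u.1 u.2.
Lemma toC_mul u v : toC (Cmul u v) = toC u * toC v.
Proof. by case: u => a b; case: v => c d. Qed.
Lemma toC_add u v : toC (Cadd u v) = toC u + toC v.
Proof. by case: u => a b; case: v => c d. Qed.
Lemma toC_sub u v : toC (Csub u v) = toC u - toC v.
Proof. by case: u => a b; case: v => c d. Qed.
Lemma toC_C1 : toC Defs.C1 = 1. Proof. by []. Qed.
Lemma toC_C0 : toC Defs.C0 = 0. Proof. by []. Qed.
Lemma toC_cpow u n : toC (cpow u n) = toC u ^+ n.
Proof. elim: n => [|n IH] /=; first by rewrite toC_C1 expr0. by rewrite toC_mul IH exprS. Qed.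
Lemma toC_inj u v : toC u = toC v -> u = v.
Proof. by case: u => a b; case: v => c d [-> ->]. Qed.

Lemma nm2_1 : nm2 1 = 1.
Proof. by rewrite /nm2 Re1 Im1 expr1n expr0n addr0. Qed.
Lemma nm2X x n : nm2 (x ^+ n) = nm2 x ^+ n.
Proof. elim: n => [|n IH]; first by rewrite !expr0 nm2_1. by rewrite !exprS nm2M IH. Qed.

Lemma unityC (xi : C) : xi ^+ 9 = 1 -> xi != 1 -> s_const ^+ 2 <= nm2 (1 - xi).
Proof.
move=> h9 hne.
have hn1 : nm2 xi ^+ 9 = 1 by rewrite -nm2X h9 nm2_1.
have hn : nm2 xi = 1 by apply/eqP; rewrite -(pexpr_eq1 (n := 9)) ?nm2_ge0 // hn1.
clear hn1; move: h9 hne hn; case: xi => x y h9 hne hn.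
have hc : cpow (x, y) 9 = (1, 0).
  by apply: toC_inj; rewrite toC_cpow /toC /= h9.
have hne' : (x, y) <> (1, 0).
  by move=> [ex ey]; move: hne; rewrite ex ey eqxx.
have hx2 : Rpow_def.pow x 2 + Rpow_def.pow y 2 = 1.
  by move: hn; rewrite /nm2 !RpowE.
have hre := unity_re x y hx2 hc hne'.
have hs := s_sq.
move/RleP: hre => hre.
rewrite !RealsE /= in hre hs.
rewrite hs /nm2 ReD ImD ReN ImN Re1 Im1 /=.
move: hn; rewrite /nm2 /= => hn.
lra.
Qed.

Lemma Qroot_bound c b : c != 0 -> root (Q c) b -> s_const ^+ 2 * nm2 b <= nm2 c.
Proof.
move=> hc /eqP hr.
have h9 := Q_eval c b; rewrite hr mulr0 in h9.
have hb : b != 0.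
  apply/negP => /eqP hb; move: h9; rewrite hb subr0 expr0n /= addr0 => /esym/eqP.
  by rewrite expf_eq0 /= (negbTE hc).
set xi := (b - c) / b.
have hb9 : b ^+ 9 != 0 by rewrite expf_eq0 (negbTE hb) andbF.
have hxi9 : xi ^+ 9 = 1.
  rewrite /xi expr_div_n.
  have -> : (b - c) ^+ 9 = b ^+ 9.
    have -> : (b - c) ^+ 9 = - (c - b) ^+ 9 by ring.
    by move/eqP: h9; rewrite eq_sym addr_eq0 => /eqP ->; rewrite opprK.
  by rewrite divff.
have hxi1 : xi != 1.
  apply/negP => /eqP; rewrite /xi => /(congr1 (fun t => t * b)).
  rewrite divfK // mul1r => /eqP; rewrite subr_eq addrC -subr_eq subrr eq_sym.
  by rewrite (negbTE hc).
have hu := unityC hxi9 hxi1.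
have e : 1 - xi = c / b by rewrite /xi; field.
rewrite e in hu.
have hnb := nm2_gt0 hb.
have : nm2 (c / b) * nm2 b = nm2 c by rewrite -nm2M divfK.
move=> <-.
by rewrite ler_wpM2r // ltW.
Qed.

Lemma prod_sign (bs : seq C) y : \prod_(b <- bs) (b - y) = (-1) ^+ size bs * \prod_(b <- bs) (y - b).
Proof.
elim: bs => [|b bs IH]; first by rewrite !big_nil expr0 mulr1.
by rewrite !big_cons IH /= exprS; ring.
Qed.

Lemma poly_ext (p q : {poly C}) : (forall x, p.[x] = q.[x]) -> p = q.
Proof.
move=> h; apply/eqP; rewrite -subr_eq0; apply/eqP.
apply: (roots_geq_poly_eq0 (rs := [seq (i%:R : C) | i <- iota 0 (size (p - q))])).
- by apply/allP => x /mapP [i _ ->]; rewrite /root hornerD hornerN h subrr.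
- rewrite map_inj_uniq ?iota_uniq // => a b /eqP; by rewrite eqr_nat => /eqP.
- by rewrite size_map size_iota.
Qed.

Definition fromC (x : C) : Cx := (Rec x, Imc x).
Lemma toC_fromC x : toC (fromC x) = x. Proof. by case: x. Qed.
Lemma Cnat n : Complex (n%:R) 0 = (n%:R : C).
Proof. by apply: C_eq; rewrite /= ?Ren ?Imn. Qed.

Lemma peval_poly (ws : list Cx) (sh : C) x :
  (\prod_(w <- ws) ('X - (toC w - sh)%:P)).[x] = toC (peval ws (fromC (x + sh))).
Proof.
elim: ws => [|w ws IH]; first by rewrite big_nil hornerC.
by rewrite big_cons hornerM hornerXsubC IH /= toC_mul toC_sub toC_fromC; congr (_ * _); ring.
Qed.
Lemma pderiv_poly (ws : list Cx) (sh : C) x :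
  (\prod_(w <- ws) ('X - (toC w - sh)%:P))^`().[x] = toC (pderiv ws (fromC (x + sh))).
Proof.
elim: ws => [|w ws IH]; first by rewrite big_nil derivC horner0.
rewrite big_cons derivM derivXsubC mul1r hornerD hornerM hornerXsubC IH peval_poly /=.
rewrite toC_add toC_mul toC_sub toC_fromC; congr (_ + _ * _); ring.
Qed.

Lemma nm2_dsq u a : nm2 (toC u - toC (RtoC a)) = dsq u a.
Proof. case: u => x y; by rewrite /nm2 /dsq ReD ImD ReN ImN !RpowE /= oppr0 addr0 RminusE RplusE. Qed.

Lemma nth_eq (T : Type) (x0 : T) (s : list T) i : List.nth i s x0 = nth x0 s i.
Proof. by elim: s i => [|x s IH] [|i] //=. Qed.
Lemma size_len (T : Type) (s : list T) : size s = length s.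
Proof. by elim: s => //= x s ->. Qed.

Lemma crit_far (a : R) (zk zeta : list Cx) :
  length zk = 8%N -> is_crit (RtoC a :: zk) zeta ->
  (forall j : nat, lt j 8 -> Rlt 1 (dsq (List.nth j zeta Defs.C0) a)) ->
  forall k : nat, lt k 8 -> Rlt 0 (dsq (List.nth k zk Defs.C0) a) ->
  Rlt (Rpow_def.pow s_const 2) (dsq (List.nth k zk Defs.C0) a).
Proof.
move=> hlen [hlz hcrit] hrho k /ssrnat.ltP hk hpos.
move/RltP: hpos => hpos.
apply/RltP; rewrite RpowE ltNge; apply/negP => hle.
set sh := toC (RtoC a).
set f := fun w : Cx => toC w - sh.
set ws := RtoC a :: zk.
set P := \prod_(w <- ws) ('X - (f w)%:P).
set F := \prod_(w <- zeta) ('X - (f w)%:P).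
have hPm : P = \prod_(r <- map f ws) ('X - r%:P) by rewrite big_map.
have hFm : F = \prod_(r <- map f zeta) ('X - r%:P) by rewrite big_map.
have hlz8 : size zeta = 8%N by rewrite size_len hlz /= hlen.
have hsF : size F = 9%N by rewrite hFm size_prod_XsubC size_map hlz8.
have hPF : P^`() = 9%:R *: F.
  apply: poly_ext => x.
  have hl9 : length (RtoC a :: zk) = 9%N by rewrite /= hlen.
  rewrite pderiv_poly hcrit hornerZ peval_poly toC_mul hl9 INRE.
  by rewrite (_ : toC (RtoC 9%:R) = Complex 9%:R 0) // Cnat.
set c := f (List.nth k zk Defs.C0).
have hnc : nm2 c = dsq (List.nth k zk Defs.C0) a by rewrite /c /f nm2_dsq.
have hc0 : c != 0.
  apply/negP => /eqP hc; move: hpos; rewrite -hnc hc /nm2 /= expr0n /= addr0 ltxx //.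
have [bs hbs] := closed_field_poly_normal (Q c).
rewrite Q_lead scale1r in hbs.
have hsb : size bs = 8%N.
  by have := Q_size c; rewrite hbs size_prod_XsubC => -[].
have hs2 : 0 < s_const ^+ 2 by rewrite exprn_gt0 //; apply/RltP; exact: s_pos.
have hbin : forall b, b \in bs -> nm2 b <= 1.
  move=> b hb.
  have hr : root (Q c) b by rewrite hbs root_prod_XsubC.
  have h := Qroot_bound hc0 hr.
  have h2 : s_const ^+ 2 * nm2 b <= s_const ^+ 2 by apply: (le_trans h); rewrite hnc.
  by rewrite -(ler_pM2l hs2) mulr1.
have hQ : forall y, c * \prod_(b <- bs) (b - y) =
    ((c - y)^+(size bs).+1 - (-y)^+(size bs).+1) / ((size bs).+1)%:R.
  move=> y; rewrite prod_sign hsb (_ : (-1) ^+ 8 = 1 :> C); last by ring.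
  rewrite mul1r.
  have -> : \prod_(b <- bs) (y - b) = (Q c).[y].
    by rewrite hbs horner_prod; apply: eq_bigr => b _; rewrite hornerXsubC.
  have E := Q_eval c y.
  rewrite (_ : (c - y) ^+ 9 = 9 * c * (Q c).[y] - y ^+ 9); last by rewrite E; ring.
  by field.
have hP0 : P.[0] = 0.
  by apply/eqP; rewrite -/(root P 0) hPm root_prod_XsubC /= in_cons /f /sh subrr eqxx.
have hPc : P.[c] = 0.
  apply/eqP; rewrite -/(root P c) hPm root_prod_XsubC /= in_cons; apply/orP; right.
  apply: map_f.
  by rewrite nth_eq; apply: mem_nth; rewrite size_len hlen.
have h9 : (9%:R : C) != 0 by rewrite pnatr_eq0.
have hkey : (Lit bs F)`_0 = 0.
  apply: (key_lemma (P := (9%:R)^-1 *: P) hc0 hQ).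
  - by rewrite hsF hsb.
  - by rewrite derivZ hPF scalerA mulVf // scale1r.
  - by rewrite !hornerZ hP0 hPc.
have hgr : Lit bs F != 0.
  apply: grace.
  - by rewrite -size_poly_eq0 hsF.
  - by rewrite hsF hsb.
  - move=> x; rewrite hFm root_prod_XsubC => /mapP [w hw ->].
    have [j hj ->] : exists2 j, (j < size zeta)%N & w = nth Defs.C0 zeta j.
      by exists (index w zeta); rewrite ?index_mem ?nth_index.
    rewrite /f nm2_dsq.
    have := hrho j; rewrite hlz8 in hj.
    move=> /(_ (elimT ssrnat.ltP hj)) /RltP.
    by rewrite nth_eq.
  - exact: hbin.
have := @Lit_size bs F; rewrite hsF hsb => /(_ isT) /size1_polyC.
by rewrite hkey => hL; rewrite hL eqxx in hgr.
Qed.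
End CA.

Lemma Cmod_sub_dsq a u : Cmod (Csub (RtoC a) u) = sqrt (dsq u a).
Proof. destruct u as [x y]. unfold Cmod, Csub, RtoC, dsq; simpl. f_equal. ring. Qed.

Lemma Cmod_mul u v : Cmod (Cmul u v) = Cmod u * Cmod v.
Proof.
destruct u as [a b], v as [c d]; unfold Cmod, Cmul; simpl.
rewrite <- sqrt_mult by nra. f_equal. ring.
Qed.

Lemma Cmod_peval_cons w ws x : Cmod (peval (w :: ws) x) = Cmod (Csub x w) * Cmod (peval ws x).
Proof. cbn [peval]. apply Cmod_mul. Qed.
Lemma Cmod_peval_nil x : Cmod (peval nil x) = 1.
Proof. cbn [peval]. unfold Cmod, Defs.C1; simpl. replace (1 * (1 * 1) + 0 * (0 * 1)) with 1 by ring. apply sqrt_1. Qed.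

Lemma pderiv_head ws x : pderiv (x :: ws) x = peval ws x.
Proof.
cbn [pderiv]. destruct (peval ws x) as [p q], (pderiv ws x) as [p' q'], x as [x y].
unfold Cadd, Cmul, Csub; simpl. f_equal; ring.
Qed.

Lemma sqrt_gt1 t : 1 < sqrt t -> 1 < t.
Proof. intros H. apply sqrt_lt_0_alt. rewrite sqrt_1. exact H. Qed.
Lemma sqrt_pos_inv t : 0 < sqrt t -> 0 < t.
Proof. intros H. apply sqrt_lt_0_alt. rewrite sqrt_0. exact H. Qed.
Lemma lt_sqrt s t : 0 <= s -> s ^ 2 < t -> s < sqrt t.
Proof.
intros Hs H. rewrite <- (sqrt_square s) by exact Hs. apply sqrt_lt_1_alt. split; [nra| simpl in H; lra].
Qed.
Lemma cmod_upper a u : 0 < a -> Cmod u <= 1 -> sqrt (dsq u a) <= 1 + a.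
Proof.
intros Ha H. destruct u as [x y]. unfold Cmod, dsq in *; simpl in *.
assert (Hxy : x * (x * 1) + y * (y * 1) <= 1).
{ destruct (Rle_dec (x * (x * 1) + y * (y * 1)) 1) as [h|h]; [exact h|].
  exfalso. assert (sqrt 1 < sqrt (x * (x * 1) + y * (y * 1))) by (apply sqrt_lt_1_alt; lra).
  rewrite sqrt_1 in H0. lra. }
rewrite <- (sqrt_square (1 + a)) by lra. apply sqrt_le_1_alt. nra.
Qed.

Lemma Cmod_RtoC x : Cmod (RtoC x) = Rabs x.
Proof. unfold Cmod, RtoC; simpl. rewrite <- sqrt_Rsqr_abs. f_equal. unfold Rsqr. ring. Qed.

Lemma prod_ge1 x y : 1 <= x -> 1 <= y -> 1 <= x * y.
Proof. intros; nra. Qed.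

Theorem lemma3p13 (a : R) (zk zeta : list Cx) (v : Z) :
  0 < a < 1 ->
  length zk = 8%nat ->
  Forall (fun w => Cmod w <= 1) zk ->
  extremal 9 (RtoC a :: zk) ->
  is_crit (RtoC a :: zk) zeta ->
  Iw (RtoC a) zeta = Ip (RtoC a :: zk) zeta ->
  (forall j : nat, (j < 8)%nat -> Cmod (Csub (RtoC a) (nth j zeta C0)) > 1) ->
  IZR v >= vstar_bound a ->
  (forall j : Z, IZR j >= vstar_bound a -> (v <= j)%Z) ->
  let r := fun k : nat => Cmod (Csub (RtoC a) (nth k zk C0)) in
  let Rk := fun k : nat => r k * prod_f_R0 (fun j => Rpower (r j) (- (1 / 8))) 7 in
  sum_f_R0 (fun k => 1 / (Rk k ^ 2)) 7 <= Ustar a v.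
Proof.
intros Ha Hlen Hdisk _ Hcrit _ Hrho Hv Hmin r Rk.
assert (Hcrit0 := Hcrit).
destruct Hcrit as [Hlz Hpt].
assert (Hfar := @CA.crit_far a zk zeta Hlen Hcrit0).
assert (HP := Hpt (RtoC a)). rewrite pderiv_head in HP.
assert (HPm := f_equal Cmod HP). rewrite Cmod_mul in HPm.
simpl in Hlz. rewrite Hlen in Hlz. simpl in Hlz.
destruct zk as [|z0 [|z1 [|z2 [|z3 [|z4 [|z5 [|z6 [|z7 [|z8 zk']]]]]]]]]; simpl in Hlen; try discriminate.
destruct zeta as [|w0 [|w1 [|w2 [|w3 [|w4 [|w5 [|w6 [|w7 [|w8 ze']]]]]]]]]; simpl in Hlz; try discriminate.
clear Hlen Hlz Hcrit0 Hpt HP.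
rewrite !Cmod_peval_cons, !Cmod_peval_nil, Cmod_RtoC in HPm.
cbn [length] in HPm. replace (INR 9) with 9 in HPm by (simpl; ring).
rewrite Rabs_right in HPm by lra.
set (c0 := Cmod (Csub (RtoC a) z0)) in *. set (c1 := Cmod (Csub (RtoC a) z1)) in *.
set (c2 := Cmod (Csub (RtoC a) z2)) in *. set (c3 := Cmod (Csub (RtoC a) z3)) in *.
set (c4 := Cmod (Csub (RtoC a) z4)) in *. set (c5 := Cmod (Csub (RtoC a) z5)) in *.
set (c6 := Cmod (Csub (RtoC a) z6)) in *. set (c7 := Cmod (Csub (RtoC a) z7)) in *.
assert (Hrho' : forall j, (j < 8)%nat -> 1 < dsq (nth j (w0 :: w1 :: w2 :: w3 :: w4 :: w5 :: w6 :: w7 :: nil) C0) a).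
{ intros j Hj. apply sqrt_gt1. rewrite <- Cmod_sub_dsq. apply Hrho. exact Hj. }
assert (R0 := Hrho 0%nat ltac:(lia)). assert (R1 := Hrho 1%nat ltac:(lia)).
assert (R2 := Hrho 2%nat ltac:(lia)). assert (R3 := Hrho 3%nat ltac:(lia)).
assert (R4 := Hrho 4%nat ltac:(lia)). assert (R5 := Hrho 5%nat ltac:(lia)).
assert (R6 := Hrho 6%nat ltac:(lia)). assert (R7 := Hrho 7%nat ltac:(lia)).
cbn [nth] in R0, R1, R2, R3, R4, R5, R6, R7.
assert (HPr : 1 <= Cmod (Csub (RtoC a) w0) * (Cmod (Csub (RtoC a) w1) * (Cmod (Csub (RtoC a) w2) *
   (Cmod (Csub (RtoC a) w3) * (Cmod (Csub (RtoC a) w4) * (Cmod (Csub (RtoC a) w5) *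
   (Cmod (Csub (RtoC a) w6) * (Cmod (Csub (RtoC a) w7) * 1)))))))).
{ repeat (apply prod_ge1; [lra|]). lra. }
assert (Hc9 : 9 <= c0 * (c1 * (c2 * (c3 * (c4 * (c5 * (c6 * (c7 * 1)))))))) by (rewrite HPm; lra).
assert (Hcnn : forall u, 0 <= Cmod u) by (intro u; unfold Cmod; apply sqrt_pos).
assert (Hcpos : forall x, x = 0 -> c0 * (c1 * (c2 * (c3 * (c4 * (c5 * (c6 * (c7 * 1))))))) = 0 -> False) by (intros; lra).
assert (P0 : 0 < c0). { destruct (Hcnn (Csub (RtoC a) z0)) as [h|h]; [exact h|]. exfalso. apply (Hcpos 0); [reflexivity|]. fold c0 in h. rewrite <- h. ring. }
assert (P1 : 0 < c1). { destruct (Hcnn (Csub (RtoC a) z1)) as [h|h]; [exact h|]. exfalso. apply (Hcpos 0); [reflexivity|]. fold c1 in h. rewrite <- h. ring. }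
assert (P2 : 0 < c2). { destruct (Hcnn (Csub (RtoC a) z2)) as [h|h]; [exact h|]. exfalso. apply (Hcpos 0); [reflexivity|]. fold c2 in h. rewrite <- h. ring. }
assert (P3 : 0 < c3). { destruct (Hcnn (Csub (RtoC a) z3)) as [h|h]; [exact h|]. exfalso. apply (Hcpos 0); [reflexivity|]. fold c3 in h. rewrite <- h. ring. }
assert (P4 : 0 < c4). { destruct (Hcnn (Csub (RtoC a) z4)) as [h|h]; [exact h|]. exfalso. apply (Hcpos 0); [reflexivity|]. fold c4 in h. rewrite <- h. ring. }
assert (P5 : 0 < c5). { destruct (Hcnn (Csub (RtoC a) z5)) as [h|h]; [exact h|]. exfalso. apply (Hcpos 0); [reflexivity|]. fold c5 in h. rewrite <- h. ring. }
assert (P6 : 0 < c6). { destruct (Hcnn (Csub (RtoC a) z6)) as [h|h]; [exact h|]. exfalso. apply (Hcpos 0); [reflexivity|]. fold c6 in h. rewrite <- h. ring. }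
assert (P7 : 0 < c7). { destruct (Hcnn (Csub (RtoC a) z7)) as [h|h]; [exact h|]. exfalso. apply (Hcpos 0); [reflexivity|]. fold c7 in h. rewrite <- h. ring. }
assert (Hfar' := Hfar Hrho').
assert (Hs := s_pos).
assert (Hlow : forall k (Hk : (k < 8)%nat), s_const < r k).
{ intros k Hk. assert (HF := Hfar' k Hk).
  unfold r. rewrite Cmod_sub_dsq. apply lt_sqrt; [lra|]. apply HF.
  apply sqrt_pos_inv. rewrite <- Cmod_sub_dsq.
  destruct k as [|[|[|[|[|[|[|[|k]]]]]]]]; cbn [nth]; try assumption; lia. }
rewrite Forall_forall in Hdisk.
assert (Hup : forall k (Hk : (k < 8)%nat), r k <= 1 + a).
{ intros k Hk. unfold r. rewrite Cmod_sub_dsq. apply cmod_upper; [lra|]. apply Hdisk.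
  destruct k as [|[|[|[|[|[|[|[|k]]]]]]]]; cbn [nth]; simpl; try tauto; lia. }
unfold Rk. apply (core a r v); try assumption.
- intros k Hk. split; [apply Hlow| apply Hup]; exact Hk.
- unfold r. cbn [prod_f_R0 nth]. fold c0 c1 c2 c3 c4 c5 c6 c7.
  replace (c0 * c1 * c2 * c3 * c4 * c5 * c6 * c7) with (c0 * (c1 * (c2 * (c3 * (c4 * (c5 * (c6 * (c7 * 1)))))))) by ring.
  exact Hc9.
Qed.
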